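(* Let $P$ and $Q$ be finite posets with height functions $g$ and $h$ respectively. Give $P\times Q$ (product order) the height function $(a,b)\mapsto g(a)+h(b)$, and the disjoint union $P\sqcup Q$ the height function $g\sqcup h$ equal to $g$ on $P$ and $h$ on $Q$. Then $\mathsf{Z}_{P\times Q,g+h}=\mathsf{Z}_{P,g}\,\mathsf{Z}_{Q,h}$ and $\mathsf{Z}_{P\sqcup Q,g\sqcup h}=\mathsf{Z}_{P,g}+\mathsf{Z}_{Q,h}$.
   Context: $q$ is an indeterminate; $[n]_q=(q^n-1)/(q-1)$. A height function on a finite poset $R$ is $h:R\to\mathbb{N}$ with $h(x)<h(y)$ whenever $y$ covers $x$. The $q$-Zeta polynomial $\mathsf{Z}_{R,h}\in\mathbb{Q}(q)[x]$ is the unique polynomial with $\mathsf{Z}_{R,h}([n]_q)=\sum_{e_1\le\cdots\le e_{n-1}\text{ in }R}q^{h(e_1)+\cdots+h(e_{n-1})}$ for all integers $n\ge2$ (such a polynomial exists). *)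

(* Defs.v *)
From HB Require Import structures.
From mathcomp Require Import all_boot all_order all_algebra fraction.
Set Implicit Arguments. Unset Strict Implicit. Unset Printing Implicit Defensive.
Import Order.TTheory GRing.Theory.
Local Open Scope ring_scope.

Notation Qq := {fraction {poly rat}}.
Definition qvar : Qq := FracField.tofrac ('X : {poly rat}).

Definition qint (n : nat) : Qq := (qvar ^+ n - 1) / (qvar - 1).

Definition covers d (T : porderType d) (x y : T) : Prop :=
  (x < y)%O /\ ~ (exists z : T, (x < z)%O /\ (z < y)%O).

Definition is_height d (T : porderType d) (h : T -> nat) : Prop :=
  forall x y : T, covers x y -> (h x < h y)%N.

Definition multichain_sum (T : finType) (le : rel T) (h : T -> nat) (n : nat) : Qq :=
  \sum_(t : (n.-1).-tuple T | sorted le t) qvar ^+ (\sum_(e <- t) h e)%N.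

(* Z is the q-Zeta polynomial of (T, le, h):
   Z([n]_q) = multichain sum for all integers n >= 2 (this determines Z uniquely). *)
Definition is_qZeta (T : finType) (le : rel T) (h : T -> nat) (Z : {poly Qq}) : Prop :=
  forall n : nat, (2 <= n)%N -> Z.[qint n] = multichain_sum le h n.

Definition prod_le d1 d2 (P : porderType d1) (Q : porderType d2) : rel (P * Q) :=
  fun x y => (x.1 <= y.1)%O && (x.2 <= y.2)%O.

Definition sum_le d1 d2 (P : porderType d1) (Q : porderType d2) : rel (P + Q) :=
  fun x y => match x, y with
             | inl a, inl b => (a <= b)%O
             | inr a, inr b => (a <= b)%O
             | _, _ => false
             end.

Definition sum_height (P Q : Type) (g : P -> nat) (h : Q -> nat) : P + Q -> nat :=
  fun x => match x with inl a => g a | inr b => h b end.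

(* Main.v *)
Require Import Defs.
From mathcomp Require Import all_boot all_order all_algebra fraction.
Import GRing.Theory.
Local Open Scope ring_scope.

Section Aux.
Variables (d1 d2 : Order.disp_t) (P : finPOrderType d1) (Q : finPOrderType d2).
Variables (g : P -> nat) (h : Q -> nat).

Lemma path_zip (x : P) (y : Q) (s1 : seq P) (s2 : seq Q) :
  size s1 = size s2 ->
  path (@prod_le _ _ P Q) (x, y) (zip s1 s2) = path <=%O x s1 && path <=%O y s2.
Proof.
elim: s1 s2 x y => [|a s1 IH] [|b s2] x y //= [] Hs.
rewrite IH // /prod_le /=.
by case: (x <= a)%O; case: (y <= b)%O; case: path; case: path.
Qed.

Lemma sorted_zip (s1 : seq P) (s2 : seq Q) :
  size s1 = size s2 ->
  sorted (@prod_le _ _ P Q) (zip s1 s2) = sorted <=%O s1 && sorted <=%O s2.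
Proof.
case: s1 s2 => [|a s1] [|b s2] //= [] Hs.
exact: path_zip.
Qed.

Lemma sum_zip (s1 : seq P) (s2 : seq Q) :
  size s1 = size s2 ->
  (\sum_(e <- zip s1 s2) (g e.1 + h e.2) = \sum_(e <- s1) g e + \sum_(e <- s2) h e)%N.
Proof.
elim: s1 s2 => [|a s1 IH] [|b s2] //=; first by rewrite !big_nil.
move=> [] Hs.
by rewrite !big_cons IH //= addnACA.
Qed.

Lemma prod_part (m : nat) :
  \sum_(t : m.-tuple (P * Q) | sorted (@prod_le _ _ P Q) t)
      qvar ^+ (\sum_(e <- t) (g e.1 + h e.2))%N =
  (\sum_(t : m.-tuple P | sorted <=%O t) qvar ^+ (\sum_(e <- t) g e)%N) *
  (\sum_(t : m.-tuple Q | sorted <=%O t) qvar ^+ (\sum_(e <- t) h e)%N).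
Proof.
rewrite big_distrlr pair_big /=.
rewrite (reindex (fun p : m.-tuple P * m.-tuple Q => zip_tuple p.1 p.2)) /=.
  apply: eq_big => [[t1 t2]|[t1 t2] _] /=.
    by rewrite sorted_zip // !size_tuple.
  by rewrite sum_zip ?size_tuple // exprD.
exists (fun t : m.-tuple (P * Q) => (map_tuple fst t, map_tuple snd t)).
  move=> [t1 t2] _ /=; congr pair; apply: val_inj => /=; rewrite -?/(unzip1 _) -?/(unzip2 _).
  idtac.
    by rewrite unzip1_zip // !size_tuple.
  by rewrite unzip2_zip // !size_tuple.
move=> t _; apply: val_inj => /=.
by rewrite zip_unzip.
Qed.

Definition isl (x : P + Q) := if x is inl _ then true else false.
Definition isr (x : P + Q) := if x is inr _ then true else false.
Definition unl (a : P) (x : P + Q) := if x is inl b then b else a.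
Definition unr (a : Q) (x : P + Q) := if x is inr b then b else a.

Lemma path_isl a s : path (@sum_le _ _ P Q) (inl a) s -> all isl s.
Proof.
elim: s a => [|[b|b] s IH] a //= /andP [_ H].
by rewrite (IH b H).
Qed.

Lemma path_isr a s : path (@sum_le _ _ P Q) (inr a) s -> all isr s.
Proof.
elim: s a => [|[b|b] s IH] a //= /andP [_ H].
by rewrite (IH b H).
Qed.

Lemma map_unl a s : all isl s -> map inl (map (unl a) s) = s.
Proof. by elim: s => [|[b|b] s IH] //= H; rewrite IH. Qed.

Lemma map_unr a s : all isr s -> map inr (map (unr a) s) = s.
Proof. by elim: s => [|[b|b] s IH] //= H; rewrite IH. Qed.

Lemma sum_part (k : nat) :
  \sum_(t : k.+1.-tuple (P + Q) | sorted (@sum_le _ _ P Q) t)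
      qvar ^+ (\sum_(e <- t) sum_height g h e)%N =
  \sum_(t : k.+1.-tuple P | sorted <=%O t) qvar ^+ (\sum_(e <- t) g e)%N +
  \sum_(t : k.+1.-tuple Q | sorted <=%O t) qvar ^+ (\sum_(e <- t) h e)%N.
Proof.
pose A := [set map_tuple (@inl P Q) u | u in [set u : k.+1.-tuple P | sorted (<=%O : rel P) u]].
pose B := [set map_tuple (@inr P Q) u | u in [set u : k.+1.-tuple Q | sorted (<=%O : rel Q) u]].
have injl : injective (fun u : k.+1.-tuple P => map_tuple (@inl P Q) u).
  move=> u v /(congr1 val) /= /(inj_map (@inl_inj _ _)) E; exact: val_inj.
have injr : injective (fun u : k.+1.-tuple Q => map_tuple (@inr P Q) u).
  move=> u v /(congr1 val) /= /(inj_map (@inr_inj _ _)) E; exact: val_inj.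
have -> : \sum_(t : k.+1.-tuple (P + Q) | sorted (@sum_le _ _ P Q) t)
      qvar ^+ (\sum_(e <- t) sum_height g h e)%N =
   \sum_(t in A :|: B) qvar ^+ (\sum_(e <- t) sum_height g h e)%N.
  apply: eq_bigl => t; apply/idP/idP.
    case: t => [[|x s] Hs] //= Hp.
    rewrite inE; apply/orP.
    case: x Hs Hp => a Hs Hp; [left|right]; apply/imsetP.
      have E : map inl (map (unl a) (inl a :: s)) = inl a :: s.
        by rewrite /=; congr cons; apply: map_unl; exact: (path_isl _ _ Hp).
      exists (map_tuple (unl a) (@Tuple _ _ (inl a :: s) Hs)).
        by rewrite inE /=; move: Hp; rewrite -[path _ _ _]/(sorted _ (inl a :: s)) -{1}E sorted_map.
      by apply: val_inj => /=.
      have E : map inr (map (unr a) (inr a :: s)) = inr a :: s.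
        by rewrite /=; congr cons; apply: map_unr; exact: (path_isr _ _ Hp).
      exists (map_tuple (unr a) (@Tuple _ _ (inr a :: s) Hs)).
        by rewrite inE /=; move: Hp; rewrite -[path _ _ _]/(sorted _ (inr a :: s)) -{1}E sorted_map.
      by apply: val_inj => /=.
  rewrite inE => /orP [] /imsetP [u]; rewrite inE => Hu -> /=;
    by rewrite sorted_map.
rewrite (@eq_bigl _ _ _ _ _ _ [predU A & B]); last by move=> t; rewrite !inE.
rewrite bigU /=; last first.
  rewrite -setI_eq0; apply/eqP/setP => t; rewrite !inE.
  apply/andP => [[/imsetP [u _ ->] /imsetP [v _]]].
  case: u v => [[|a u] Hu] [[|b v] Hv] //= /(congr1 val) //=.
congr (_ + _).
  rewrite big_imset /=; last by move=> u v _ _; apply: injl.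
  rewrite big_set /=; apply: eq_bigr => u _; by rewrite big_map.
rewrite big_imset /=; last by move=> u v _ _; apply: injr.
rewrite big_set /=; apply: eq_bigr => u _; by rewrite big_map.
Qed.

End Aux.

Theorem mainTheorem11 (d1 d2 : Order.disp_t) (P : finPOrderType d1) (Q : finPOrderType d2)
  (g : P -> nat) (h : Q -> nat) (ZP ZQ : {poly Qq}) :
  is_height g -> is_height h ->
  is_qZeta (<=%O : rel P) g ZP -> is_qZeta (<=%O : rel Q) h ZQ ->
  is_qZeta (@prod_le _ _ P Q) (fun x => (g x.1 + h x.2)%N) (ZP * ZQ) /\
  is_qZeta (@sum_le _ _ P Q) (sum_height g h) (ZP + ZQ).
Proof.
move=> _ _ HP HQ; split => n Hn.
  by rewrite hornerM HP // HQ // /multichain_sum prod_part.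
rewrite hornerD HP // HQ // /multichain_sum.
case: n Hn => [|[|k]] // _.
by rewrite sum_part.
Qed.
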